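(* Let $d \ge 1$ and $k \ge 1$ be integers. If $P \subseteq \mathbb{R}^d$ is a convex lattice polytope (all vertices in $\mathbb{Z}^d$) that does not contain a lattice segment of length $k$, then $|P \cap \mathbb{Z}^d| \le k^d$.
   Context: For $x,y \in \mathbb{Z}^d$, the line segment $[x,y]$ is called a lattice segment of length $m-1$ if $|[x,y]\cap \mathbb{Z}^d| = m$. Equivalently, a lattice segment of length $k$ is the convex hull of a set $\{x, x+z, x+2z,\dots,x+kz\}$ with $x,z\in\mathbb{Z}^d$, $z \ne 0$, and $z$ primitive; and $P$ contains a lattice segment of length $k$ if and only if $P$ contains a set $\{x, x+z, \dots, x+kz\}$ with $x,z\in\mathbb{Z}^d$, $z\neq 0$. *)

(* Defs.v *)
From HB Require Import structures.
From mathcomp Require Import all_boot all_order all_algebra.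
Set Implicit Arguments. Unset Strict Implicit. Unset Printing Implicit Defensive.
Import Order.TTheory GRing.Theory Num.Theory.
Local Open Scope ring_scope.

Definition lat_to_real (R : realFieldType) (d : nat) (x : 'rV[int]_d) : 'rV[R]_d :=
  map_mx (fun z : int => z%:~R) x.

(* The convex lattice polytope P = conv(V), V a finite list of lattice points:
   y \in P iff y is a convex combination of the points of V. *)
Definition in_conv_hull (R : realFieldType) (d : nat) (V : seq 'rV[int]_d)
    (y : 'rV[R]_d) : Prop :=
  exists w : 'I_(size V) -> R,
    (forall i, 0 <= w i) /\ \sum_i w i = 1 /\
    y = \sum_i w i *: lat_to_real R (nth 0 V i).

(* P contains a lattice segment of length k: P contains a set
   {x, x+z, ..., x+kz} with x, z in Z^d, z <> 0. *)
Definition contains_lattice_segment (R : realFieldType) (d : nat)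
    (V : seq 'rV[int]_d) (k : nat) : Prop :=
  exists (x z : 'rV[int]_d), z != 0 /\
    forall j : nat, (j <= k)%N -> @in_conv_hull R d V (lat_to_real R (x + z *+ j)).

(* Main.v *)
Require Import Defs.
From HB Require Import structures.
From mathcomp Require Import all_boot all_order all_algebra.
From mathcomp Require Import reals.
Import Order.TTheory GRing.Theory Num.Theory.
Local Open Scope ring_scope.

Lemma mxMn_entry (d : nat) (z : 'rV[int]_d) (j : nat) a b :
  (z *+ j) a b = z a b *+ j.
Proof. elim: j => [|j IH]; first by rewrite !mulr0n mxE. by rewrite !mulrS mxE IH. Qed.

Lemma conv2 (R : realFieldType) (d : nat) (V : seq 'rV[int]_d) (y1 y2 : 'rV[R]_d) t :
  0 <= t -> t <= 1 -> in_conv_hull V y1 -> in_conv_hull V y2 ->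
  in_conv_hull V ((1 - t) *: y1 + t *: y2).
Proof.
move=> t0 t1 [w1 [w10 [w11 ->]]] [w2 [w20 [w21 ->]]].
exists (fun i => (1 - t) * w1 i + t * w2 i); split; [|split].
- move=> i; apply: addr_ge0; apply: mulr_ge0 => //; by rewrite subr_ge0.
- by rewrite big_split /= -!mulr_sumr w11 w21 !mulr1 subrK.
- rewrite !scaler_sumr -big_split /=; apply: eq_bigr => i _.
  by rewrite [RHS]scalerDl !scalerA.
Qed.

Lemma arith_id (R : realFieldType) (P Z : R) (m k : nat) : (0 < k)%N ->
  P + Z *+ m = (1 - m%:R / k%:R) * P + m%:R / k%:R * (P + Z *+ k).
Proof.
move=> k0; rewrite -[Z *+ m]mulr_natr -[Z *+ k]mulr_natr.
have : (k%:R : R) != 0 by rewrite pnatr_eq0 -lt0n.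
move: (k%:R : R) (m%:R : R) => K M K0.
by rewrite mulrBl mul1r mulrDr addrA subrK [Z * K]mulrC mulrA divfK // mulrC.
Qed.

Theorem proposition3p2 (R : realType) (d k : nat) (V : seq 'rV[int]_d) :
  (1 <= d)%N -> (1 <= k)%N ->
  ~ @contains_lattice_segment R d V k ->
  forall S : seq 'rV[int]_d, uniq S ->
    (forall p, p \in S -> @in_conv_hull R d V (lat_to_real R p)) ->
    (size S <= k ^ d)%N.
Proof.
move=> _ k1 Hno S uS HS.
case: k k1 Hno => [//|k'] _ Hno.
set f := fun p : 'rV[int]_d =>
  [ffun i : 'I_d => (inord (absz ((p ord0 i) %% (k'.+1)%:Z)%Z) : 'I_k'.+1)].
case: (boolP (uniq (map f S))) => [um|].
  move/card_uniqP: um; rewrite size_map => <-.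
  by apply: leq_trans (max_card _) _; rewrite card_ffun !card_ord.
case/(uniqPn 0) => i [j [ij jS]].
have iS : (i < size S)%N by apply: ltn_trans ij _; rewrite size_map in jS.
rewrite size_map in jS.
rewrite !(nth_map 0) // => Efpq.
set p := nth 0 S i; set q := nth 0 S j.
have pq : p != q by rewrite nth_uniq // neq_ltn ij.
have kpos : (0 < (k'.+1)%:Z)%R by [].
have modeq b : ((q ord0 b) %% (k'.+1)%:Z = (p ord0 b) %% (k'.+1)%:Z)%Z.
  have := congr1 (fun g : {ffun 'I_d -> 'I_k'.+1} => nat_of_ord (g b)) Efpq; rewrite /= !ffunE /= !inordK.
  - move=> h. rewrite -[LHS]gez0_abs ?modz_ge0 // -[RHS]gez0_abs ?modz_ge0 //.
    by rewrite h.
  - by rewrite -ltz_nat gez0_abs ?modz_ge0 ?ltz_pmod.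
  - by rewrite -ltz_nat gez0_abs ?modz_ge0 ?ltz_pmod.
have dv b : ((k'.+1)%:Z %| q ord0 b - p ord0 b)%Z by rewrite -eqz_mod_dvd; apply/eqP.
set z : 'rV[int]_d := \row_b (((q ord0 b - p ord0 b) %/ (k'.+1)%:Z)%Z).
have qE : q = p + z *+ k'.+1.
  apply/matrixP => a b; rewrite mxE mxMn_entry mxE ord1.
  by rewrite -mulr_natr natz divzK ?dv // addrCA subrr addr0.
apply: False_ind; apply: Hno; exists p, z; split.
  apply: contra pq => /eqP z0; apply/eqP; by rewrite qE z0 mul0rn addr0.
move=> m mk.
have kR : (0 : R) < (k'.+1)%:R by rewrite ltr0n.
set t : R := m%:R / (k'.+1)%:R.
have t0 : 0 <= t by rewrite divr_ge0 // ler0n.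
have t1 : t <= 1 by rewrite ler_pdivrMr // mul1r ler_nat.
have -> : lat_to_real R (p + z *+ m) =
    (1 - t) *: lat_to_real R p + t *: lat_to_real R q.
  apply/matrixP => a b; rewrite qE !mxE !mxMn_entry !intrD !rmorphMn.
  rewrite /t.
  exact: arith_id.
apply: conv2 => //; apply: HS; exact: mem_nth.
Qed.
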